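(* Let $G$ be a group and $N$ a finitely generated normal subgroup of $G$, and assume that $N$ is residually simple. Then $N\cap \Phi_f(G)=1$. In particular, if $\Phi_f(G/N)=1$, then $\Phi_f(G)=1$.
   Context: A group $N$ is residually simple if for every nontrivial $x\in N$ there exist a finite non-abelian simple group $S$ and an epimorphism $f:N\to S$ with $f(x)\neq 1$. For a group $G$, a maximal subgroup is a proper subgroup maximal with respect to inclusion among proper subgroups, and $\Phi_f(G)$ is the intersection of all maximal subgroups of finite index in $G$ (taken to be $G$ if there are none). *)

(* Defs.v *)
From HB Require Import structures.
From mathcomp Require Import all_boot all_fingroup all_solvable.
Set Implicit Arguments. Unset Strict Implicit. Unset Printing Implicit Defensive.
Local Open Scope group_scope.

Section AbstractGroups.
Variable G : groupType.

Definition is_subgroup (H : G -> Prop) : Prop :=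
  H 1 /\ (forall x y, H x -> H y -> H (x * y)) /\ (forall x, H x -> H x^-1).

Definition is_normal (N : G -> Prop) : Prop :=
  is_subgroup N /\ forall g n, N n -> N (g^-1 * n * g).

Definition finitely_generated (N : G -> Prop) : Prop :=
  exists l : seq G,
    (forall x, x \in l -> N x) /\
    (forall H : G -> Prop, is_subgroup H -> (forall x, x \in l -> H x) ->
       forall y, N y -> H y).

Definition finite_index (H : G -> Prop) : Prop :=
  exists l : seq G, forall g, exists2 x, x \in l & H (x^-1 * g).

Definition maximal_subgroup (M : G -> Prop) : Prop :=
  is_subgroup M /\ (exists g, ~ M g) /\
  forall K : G -> Prop, is_subgroup K -> (forall x, M x -> K x) ->
    (forall x, K x -> M x) \/ (forall x, K x).

(* Phi_f(G): intersection of all maximal subgroups of finite index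
   (the whole of G when there are none) *)
Definition Phi_f : G -> Prop :=
  fun g => forall M : G -> Prop, maximal_subgroup M -> finite_index M -> M g.

Definition epi_on (N : G -> Prop) (gT : finGroupType) (S : {group gT})
  (f : G -> gT) : Prop :=
  (forall x y, N x -> N y -> f (x * y) = f x * f y) /\
  (forall x, N x -> f x \in S) /\
  (forall s, s \in S -> exists2 x, N x & f x = s).

Definition residually_simple (N : G -> Prop) : Prop :=
  forall x, N x -> x <> 1 ->
    exists (gT : finGroupType) (S : {group gT}) (f : G -> gT),
      [/\ simple S, ~~ abelian S, epi_on N S f & f x != 1].

End AbstractGroups.

Definition group_hom (G Q : groupType) (p : G -> Q) : Prop :=
  forall x y, p (x * y) = p x * p y.

(* Main.v *)
Require Import Defs.
From HB Require Import structures.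
From mathcomp Require Import all_boot all_fingroup all_solvable.
From Stdlib Require Import ClassicalEpsilon Classical.
Set Implicit Arguments. Unset Strict Implicit. Unset Printing Implicit Defensive.
Local Open Scope group_scope.

Definition pb (P : Prop) : bool := if excluded_middle_informative P then true else false.
Lemma pbP (P : Prop) : reflect P (pb P).
Proof. rewrite /pb; case: excluded_middle_informative => h; by constructor. Qed.

Section Act.
Variables (G : groupType) (N : G -> Prop) (l : seq G) (gT : finGroupType) (S : {group gT}).
Hypotheses (nN : is_normal N) (genN : forall x, x \in l -> N x)
  (gen : forall H : G -> Prop, is_subgroup H -> (forall x, x \in l -> H x) ->
       forall y, N y -> H y).

Lemma N1 : N 1. Proof. by case: nN => [[]]. Qed.
Lemma NM x y : N x -> N y -> N (x * y). Proof. by case: nN => [[_ []]]; auto. Qed.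
Lemma NV x : N x -> N x^-1. Proof. by case: nN => [[_ []]]; auto. Qed.
Definition cj (g y : G) := g * y * g^-1.
Lemma Ncj g y : N y -> N (cj g y).
Proof. case: nN => _ h /(h g^-1); by rewrite invgK. Qed.

Definition hom_on (h : G -> gT) := forall x y, N x -> N y -> h (x * y) = h x * h y.

Lemma hom1 h : hom_on h -> h 1 = 1.
Proof. move=> H; have := H 1 1 N1 N1; rewrite mulg1 => e.
by apply: (mulgI (h 1)); rewrite mulg1 -e. Qed.

Lemma homV h y : hom_on h -> N y -> h y^-1 = (h y)^-1.
Proof. move=> H Ny; have := H y y^-1 Ny (NV Ny); rewrite mulgV (hom1 H) => e.
by rewrite (mulg1_eq (esym e)). Qed.

Lemma uniq_hom h1 h2 : hom_on h1 -> hom_on h2 -> map h1 l = map h2 l ->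
  forall n, N n -> h1 n = h2 n.
Proof.
move=> H1 H2 e n Nn.
suff : N n /\ h1 n = h2 n by case.
apply: (gen (H := fun y => N y /\ h1 y = h2 y)) => //.
- split; first by rewrite (hom1 H1) (hom1 H2); split=> //; exact: N1.
  split.
  + move=> x y [Nx ex] [Ny ey]; split; first exact: NM.
    by rewrite H1 // H2 // ex ey.
  + move=> x [Nx ex]; split; first exact: NV.
    by rewrite homV // homV // ex.
- move=> x xl; split; first exact: genN.
  by apply: (eq_in_map h1 h2 l).2.
Qed.

Definition T := (size l).-tuple gT.
Definition goodt (t : T) := exists h, epi_on N S h /\ map h l = t.
Definition hof (t : T) : G -> gT :=
  epsilon (inhabits (fun _ => 1)) (fun h => epi_on N S h /\ map h l = t).
Lemma hofP t : goodt t -> epi_on N S (hof t) /\ map (hof t) l = t.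
Proof. exact: epsilon_spec. Qed.

Definition act (t : T) (g : G) : T :=
  if excluded_middle_informative (goodt t)
  then map_tuple (fun y => hof t (cj g y)) (in_tuple l) else t.

Lemma act_good t g : goodt t -> val (act t g) = map (fun y => hof t (cj g y)) l.
Proof. by rewrite /act; case: excluded_middle_informative. Qed.
Lemma act_bad t g : ~ goodt t -> act t g = t.
Proof. by rewrite /act; case: excluded_middle_informative. Qed.

Lemma cjM g x y : cj g x * cj g y = cj g (x * y).
Proof. by rewrite /cj !mulgA mulgVK. Qed.
Lemma cjK g x : cj g (cj g^-1 x) = x.
Proof. by rewrite /cj invgK !mulgA mulgV mul1g mulgK. Qed.
Lemma cjcj g g' y : cj g (cj g' y) = cj (g * g') y.
Proof. by rewrite /cj invMg !mulgA. Qed.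
Lemma cj1 y : cj 1 y = y.
Proof. by rewrite /cj invg1 mulg1 mul1g. Qed.

Lemma epi_cj h g : epi_on N S h -> epi_on N S (fun y => h (cj g y)).
Proof.
case=> H [HS Hs]; split; [|split].
- by move=> x y Nx Ny /=; rewrite -cjM H //; apply: Ncj.
- by move=> x Nx; apply: HS; apply: Ncj.
- move=> s /Hs [x Nx <-]; exists (cj g^-1 x); first exact: Ncj.
  by rewrite cjK.
Qed.

Lemma act_goodt t g : goodt t -> goodt (act t g) /\
   forall n, N n -> hof (act t g) n = hof t (cj g n).
Proof.
move=> gt; have [ep ml] := hofP gt.
have gt' : goodt (act t g).
  by exists (fun y => hof t (cj g y)); split; [exact: epi_cj | rewrite act_good].
split=> //; have [ep' ml'] := hofP gt'.
apply: uniq_hom; [exact: ep'.1 | exact: (epi_cj g ep).1 |].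
by rewrite ml' act_good.
Qed.

Lemma act1 t : act t 1 = t.
Proof.
case: (classic (goodt t)) => gt; last exact: act_bad.
apply: val_inj; rewrite act_good //= -(hofP gt).2.
by apply: eq_map => y; rewrite cj1.
Qed.

Lemma actM t g g' : act (act t g) g' = act t (g * g').
Proof.
case: (classic (goodt t)) => gt; last by rewrite !act_bad.
have [gt' ag] := act_goodt g gt.
apply: val_inj; rewrite act_good // act_good //.
apply/eq_in_map => y yl /=; rewrite ag; last by apply: Ncj; apply: genN.
by rewrite cjcj.
Qed.

Lemma actK g : cancel (act^~ g) (act^~ g^-1).
Proof. by move=> t; rewrite actM mulgV act1. Qed.

Definition phi (g : G) : {perm T} := perm (can_inj (actK g)).
Lemma phiE g t : phi g t = act t g. Proof. by rewrite permE. Qed.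
Lemma phiM g g' : phi (g * g') = phi g * phi g'.
Proof. by apply/permP => t; rewrite permM !phiE actM. Qed.
Lemma phi1 : phi 1 = 1.
Proof. by apply/permP => t; rewrite perm1 phiE act1. Qed.
Lemma phiV g : phi g^-1 = (phi g)^-1.
Proof. by apply: (mulgI (phi g)); rewrite -phiM !mulgV phi1. Qed.


Lemma center_triv z : simple S -> ~~ abelian S -> z \in S ->
  (forall s, s \in S -> z * s * z^-1 = s) -> z = 1.
Proof.
move=> simS nab zS e.
have zZ : z \in 'Z(S).
  apply/centerP; split=> // s sS; rewrite /commute.
  by rewrite -{2}(e s sS) mulgVK.
case/simpleP: simS => _ /(_ ('Z(S))%G (center_normal S)) [Z1|ZS].
    by rewrite Z1 in zZ; apply/set1gP.
case/negP: nab; apply/center_idP.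
exact: ZS.
Qed.

Lemma homcj h n m : hom_on h -> N n -> N m -> h (cj n m) = h n * h m * (h n)^-1.
Proof. by move=> H Nn Nm; rewrite /cj H ?homV ?H //; [exact: NM | exact: NV]. Qed.

Lemma kerK n : simple S -> ~~ abelian S -> N n -> phi n = 1 ->
  forall h, epi_on N S h -> h n = 1.
Proof.
move=> simS nab Nn pn h eh.
pose t : T := map_tuple h (in_tuple l).
have gt : goodt t by exists h.
have [et mt] := hofP gt.
have e1 : act t n = t by rewrite -phiE pn perm1.
have agr : forall m, N m -> hof t m = h m.
  by apply: uniq_hom; [exact: et.1 | exact: eh.1 | rewrite mt].
have agr2 : forall m, N m -> hof t (cj n m) = hof t m.
  apply: uniq_hom; [exact: (epi_cj n et).1 | exact: et.1 |].
  by rewrite -act_good // e1 mt.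
case: (eh) => H [HS Hs].
apply: center_triv => //; first exact: HS.
move=> s /Hs [m Nm <-]; rewrite -homcj //.
by rewrite -agr ?agr2 ?agr //; apply: Ncj.
Qed.

Lemma kerK' n : N n -> phi n != 1 -> exists h, epi_on N S h /\ h n != 1.
Proof.
move=> Nn pn.
case: (pickP (fun t => phi n t != t)) => [t Ht | none]; last first.
  by case/eqP: pn; apply/permP => t; rewrite perm1; move: (none t) => /= /negbFE/eqP.
rewrite phiE in Ht.
have gt : goodt t by apply: NNPP => bt; move: Ht; rewrite act_bad // eqxx.
have [et mt] := hofP gt.
exists (hof t); split=> //; apply/eqP => h1.
case/negP: Ht; apply/eqP/val_inj; rewrite act_good // /= -mt.
apply/eq_in_map => y yl /=.
by rewrite homcj ?h1 ?mul1g ?invg1 ?mulg1 //; [exact: et.1 | exact: genN].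
Qed.


Definition Gam : {set {perm T}} := [set p | pb (exists g, phi g = p)].
Definition NN : {set {perm T}} := [set p | pb (exists g, N g /\ phi g = p)].
Lemma GamP p : reflect (exists g, phi g = p) (p \in Gam).
Proof. by rewrite inE; exact: pbP. Qed.
Lemma NNP p : reflect (exists g, N g /\ phi g = p) (p \in NN).
Proof. by rewrite inE; exact: pbP. Qed.
Lemma mem_Gam g : phi g \in Gam.
Proof. by apply/GamP; exists g. Qed.
Lemma gGam : group_set Gam.
Proof.
apply/group_setP; split; first by rewrite -phi1 mem_Gam.
by move=> _ _ /GamP[g <-] /GamP[g' <-]; rewrite -phiM mem_Gam.
Qed.
Canonical Gam_group := Group gGam.
Lemma gNN : group_set NN.
Proof.
apply/group_setP; split; first by apply/NNP; exists 1; split; [exact: N1 | exact: phi1].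
move=> _ _ /NNP[g [Ng <-]] /NNP[g' [Ng' <-]]; apply/NNP; exists (g * g').
by split; [exact: NM | exact: phiM].
Qed.
Canonical NN_group := Group gNN.

Lemma phicj g n : phi (g^-1 * n * g) = phi n ^ phi g.
Proof. by rewrite !phiM phiV conjgE mulgA. Qed.

Lemma nNN : NN <| Gam.
Proof.
apply/andP; split; first by apply/subsetP => _ /NNP[g [_ <-]]; exact: mem_Gam.
apply/subsetP => _ /GamP[g <-]; rewrite inE; apply/subsetP => y.
rewrite mem_conjg => /NNP[n [Nn e]]; apply/NNP; exists (g^-1 * n * g); split.
  by case: nN => _; apply.
by rewrite phicj e conjgKV.
Qed.

Lemma pull_max (M : {group {perm T}}) : maximal M Gam ->
  maximal_subgroup (fun g => phi g \in M) /\ finite_index (fun g => phi g \in M).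
Proof.
case/maxgroupP => prM maxM; have sMG := proper_sub prM.
split; last first.
  pose pre (p : {perm T}) := epsilon (inhabits (1 : G)) (fun g => phi g = p).
  exists (map pre (enum [set: {perm T}])) => g.
  have pg : phi (pre (phi g)) = phi g.
    by rewrite /pre; apply: (epsilon_spec (inhabits (1 : G)) (fun g0 => phi g0 = phi g)); exists g.
  exists (pre (phi g)); first by apply: map_f; rewrite mem_enum inE.
  by rewrite phiM phiV pg mulVg group1.
split; [|split].
- split; first by rewrite phi1 group1.
  split; first by move=> x y xM yM; rewrite phiM groupM.
  by move=> x xM; rewrite phiV groupV.
- case/properP: prM => _ [_ /GamP[g <-] gM]; exists g; exact/negP.
- move=> K [K1 [KM KV]] sK.
  pose KK := [set p | pb (exists g, K g /\ phi g = p)].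
  have KKP p : reflect (exists g, K g /\ phi g = p) (p \in KK) by rewrite inE; exact: pbP.
  have gKK : group_set KK.
    apply/group_setP; split; first by apply/KKP; exists 1; split; [exact: K1 | exact: phi1].
    move=> _ _ /KKP[g [Ng <-]] /KKP[g' [Ng' <-]]; apply/KKP; exists (g * g').
    by split; [exact: KM | exact: phiM].
  pose KG := Group gKK.
  have sMK : M \subset KG.
    apply/subsetP => p pM; have /GamP[g eg] := subsetP sMG p pM.
    apply/KKP; exists g; split=> //; apply: sK; by rewrite eg.
  have sKG : KG \subset Gam by apply/subsetP => _ /KKP[g [_ <-]]; exact: mem_Gam.
  case: (boolP (KG \proper Gam)) => prK.
    have eKM := maxM KG prK sMK.
    left => g Kg; have : phi g \in KG by apply/KKP; exists g.
    by rewrite eKM.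
  right => g.
  have : phi g \in KG.
    move: prK; rewrite properE sKG /= => /negbNE/subsetP; apply; exact: mem_Gam.
  case/KKP => g' [Kg' eg].
  have -> : g = g' * (g'^-1 * g) by rewrite mulVKg.
  apply: KM => //; apply: sK; by rewrite phiM phiV eg mulVg group1.
Qed.


Lemma key x : simple S -> ~~ abelian S -> N x -> phi x != 1 -> phi x \notin 'Phi(Gam).
Proof.
move=> simS nab Nx px; apply/negP => xPhi.
pose TT := ('Phi(Gam) :&: NN)%G.
have nT : TT <| Gam := normalI (Phi_normal _) nNN.
have T1 : TT != 1 :> {set _}.
  apply/trivgPn; exists (phi x) => //; rewrite inE xPhi; apply/NNP; by exists x.
pose p := pdiv #|TT|.
have [P sylP] := Sylow_exists p TT.
have P1 : P != 1 :> {set _}.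
  by rewrite -cardG_gt1 (card_Hall sylP) p_part_gt1 pi_pdiv cardG_gt1.
have FA := Frattini_arg nT sylP.
have eN : 'N_Gam(P) = Gam.
  have : 'Phi(Gam) <*> 'N_Gam(P) = Gam.
    apply/eqP; rewrite eqEsubset join_subG Phi_sub subsetIl /=.
    rewrite -{1}FA; apply: mul_subG; last exact: joing_subr.
    exact: subset_trans (subsetIl _ _) (joing_subl _ _).
  by move/Phi_nongen; rewrite genGid.
have nP : P <| Gam.
  apply/andP; split.
    exact: subset_trans (pHall_sub sylP) (normal_sub nT).
  by rewrite -eN subsetIr.
have Z1 : 'Z(P) != 1 :> {set _} by rewrite center_nil_eq1 // (pgroup_nil (pHall_pgroup sylP)).
have nZ : 'Z(P) <| Gam := char_normal_trans (center_char P) nP.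
have [z zZ z1] := trivgPn _ Z1.
have : z \in NN.
  have := subsetP (center_sub P) z zZ => /(subsetP (pHall_sub sylP)).
  by rewrite inE => /andP[].
case/NNP => n [Nn ezn].
have [h [eh hn]] : exists h, epi_on N S h /\ h n != 1 by apply: kerK' => //; rewrite ezn.
case: (eh) => H [HS Hs].
pose A := [set s | pb (exists a, N a /\ phi a \in 'Z(P) /\ h a = s)].
have AP s : reflect (exists a, N a /\ phi a \in 'Z(P) /\ h a = s) (s \in A).
  by rewrite inE; exact: pbP.
have gA : group_set A.
  apply/group_setP; split.
    apply/AP; exists 1; split; first exact: N1.
    by rewrite phi1 group1 (hom1 H).
  move=> _ _ /AP[a [Na [Za <-]]] /AP[b [Nb [Zb <-]]]; apply/AP; exists (a * b).
  by rewrite phiM groupM // H //; split=> //; exact: NM.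
pose AG := Group gA.
have sAS : A \subset S by apply/subsetP => _ /AP[a [Na [_ <-]]]; exact: HS.
have nA : AG <| S.
  apply/andP; split=> //; apply/subsetP => s sS; rewrite inE; apply/subsetP => y.
  rewrite mem_conjg => /AP[a [Na [Za ea]]].
  have [m Nm em] := Hs s sS.
  apply/AP; exists (m^-1 * a * m); split.
    by case: nN => _; apply.
  split.
    by rewrite phicj memJ_norm // (subsetP (normal_norm nZ)) // mem_Gam.
  rewrite !H ?homV ?em ?ea ?conjgKV //; try exact: NV.
  - by rewrite -[s^-1 * _ * _]mulgA -conjgE conjgKV.
  - exact: NM (NV Nm) Na.
have abA : abelian A.
  apply/centsP => _ /AP[a [Na [Za <-]]] _ /AP[b [Nb [Zb <-]]].
  have cab : commute (phi a) (phi b).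
    exact: (centsP (center_abelian P)) _ Za _ Zb.
  rewrite /commute -!H //.
  apply: divg1_eq; rewrite -(homV H (NM Nb Na)) -H; last first.
  - exact: NV (NM Nb Na).
  - exact: NM.
  apply: (kerK simS nab) => //.
    by apply: NM; [exact: NM | apply: NV; exact: NM].
  by rewrite phiM phiV !phiM cab mulgV.
case/simpleP: simS => _ /(_ AG nA) [A1|AS].
  have : h n \in A by apply/AP; exists n; rewrite ezn.
  by rewrite -[A]/(gval AG) A1 => /set1gP /eqP; rewrite (negbTE hn).
by case/negP: nab; rewrite -AS.
Qed.


Lemma part1 x : simple S -> ~~ abelian S -> N x ->
  (exists f, epi_on N S f /\ f x != 1) -> ~ Phi_f x.
Proof.
move=> simS nab Nx [f [ef fx]] Px.
have px : phi x != 1.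
  by apply/eqP => e; case/negP: fx; apply/eqP; exact: (kerK simS nab Nx e).
have nPx := key simS nab Nx px.
have [M maxM xM] : exists2 M : {group {perm T}}, maximal M Gam & phi x \notin M.
  apply: NNPP => H; case/negP: nPx; apply/bigcapP => M /orP[/eqP -> | maxM].
    exact: mem_Gam.
  by apply/negPn/negP => xM; apply: H; exists M.
have [mM fM] := pull_max maxM.
by case/negP: xM; exact: (Px _ mM fM).
Qed.

End Act.

Section Pull.
Variables (G Q : groupType) (p : G -> Q).
Hypotheses (hp : group_hom p) (sp : forall q : Q, exists g, p g = q).

Lemma p1 : p 1 = 1.
Proof. have := hp 1 1; rewrite mulg1 => e.
by apply: (mulgI (p 1)); rewrite mulg1 -e. Qed.
Lemma pV y : p y^-1 = (p y)^-1.
Proof. have := hp y y^-1; rewrite mulgV p1 => e.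
by rewrite (mulg1_eq (esym e)). Qed.

Lemma pull_Q (M : Q -> Prop) : maximal_subgroup M -> finite_index M ->
  maximal_subgroup (fun g => M (p g)) /\ finite_index (fun g => M (p g)).
Proof.
move=> [[M1 [MM MV]] [[q0 nq0] maxM]] [lq flq].
pose pre (q : Q) := epsilon (inhabits (1 : G)) (fun g => p g = q).
have preP q : p (pre q) = q.
  by rewrite /pre; apply: (epsilon_spec (inhabits (1 : G)) (fun g0 => p g0 = q)).
split; last first.
  exists (map pre lq) => g; have [q ql Mq] := flq (p g).
  exists (pre q); first exact: map_f.
  by rewrite hp pV preP.
split; [|split].
- split; first by rewrite p1.
  split; first by move=> x y xM yM; rewrite hp; apply: MM.
  by move=> x xM; rewrite pV; apply: MV.
- by exists (pre q0); rewrite preP.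
- move=> K [K1 [KM KV]] sK.
  pose KK := fun q => exists g, K g /\ p g = q.
  have sKK : is_subgroup KK.
    split; first by exists 1; rewrite p1.
    split.
      by move=> _ _ [g [Kg <-]] [g' [Kg' <-]]; exists (g * g'); rewrite hp; split=> //; apply: KM.
    by move=> _ [g [Kg <-]]; exists g^-1; rewrite pV; split=> //; apply: KV.
  have sMK : forall q, M q -> KK q.
    by move=> q Mq; exists (pre q); rewrite preP; split=> //; apply: sK; rewrite preP.
  case: (maxM KK sKK sMK) => [sKM | allK].
    by left => g Kg; apply: sKM; exists g.
  right => g; have [g' [Kg' eg]] := allK (p g).
  have -> : g = g' * (g'^-1 * g) by rewrite mulVKg.
  apply: KM => //; apply: sK; by rewrite hp pV eg mulVg.
Qed.
End Pull.

Unset Implicit Arguments.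

Theorem lemma6p1 (G : groupType) (N : G -> Prop) :
  is_normal N -> finitely_generated N -> residually_simple N ->
  (forall x, N x -> Phi_f x -> x = 1) /\
  (forall (Q : groupType) (p : G -> Q),
     group_hom p -> (forall q : Q, exists g, p g = q) ->
     (forall g, p g = 1 <-> N g) ->
     (forall q : Q, Phi_f q -> q = 1) ->
     forall g : G, Phi_f g -> g = 1).
Proof.
move=> nN [l [genN gen]] rs.
have P1 : forall x, N x -> Phi_f x -> x = 1.
  move=> x Nx Px; case: (eqVneq x 1) => // x1.
  have [gT [S [f [simS nab ef fx]]]] := rs x Nx (elimN eqP x1).
  by case: (part1 nN genN gen simS nab Nx (ex_intro _ f (conj ef fx)) Px).
split=> // Q p hp sp ker PQ g Pg.
have Ng : N g.
  apply/ker; apply: PQ => M mM fM.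
  have [mM' fM'] := pull_Q hp sp mM fM.
  exact: (Pg _ mM' fM').
exact: P1 Ng Pg.
Qed.
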